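(* Let $\mathbf B=(\mathbf b_1,\dots,\mathbf b_n)\in\mathbb Q^{d\times n}$ be a basis of a lattice $\mathcal{L}$, let $k\in[n]$ and $\alpha>\sqrt n$ be such that $\|\tilde{\mathbf b}_i\|\le\|\tilde{\mathbf b}_j\|/\alpha$ for all $i\le k<j$. If $\mathcal{L}'\subseteq\mathcal{L}$ is a sublattice of rank $\ell\le k$ with \[ \det(\mathcal{L}')<\frac{\alpha}{\sqrt n}\cdot\min_{S\subseteq[n],\,|S|=\ell}\ \prod_{i\in S}\|\tilde{\mathbf b}_i\|, \] then $\mathcal{L}'\subseteq\mathcal{L}(\mathbf b_1,\dots,\mathbf b_k)$.
   Context: Gram–Schmidt orthogonalization: $\tilde{\mathbf b}_1=\mathbf b_1$, $\tilde{\mathbf b}_i=\Pi_{\{\mathbf b_1,\dots,\mathbf b_{i-1}\}^\perp}(\mathbf b_i)$, where $\Pi_{S^\perp}$ is orthogonal projection onto the orthogonal complement of $\mathrm{span}(S)$. $\mathcal{L}(\mathbf v_1,\dots,\mathbf v_k)$ denotes the lattice generated by the vectors. *)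

(* Defs.v *)
From mathcomp Require Import all_boot all_order all_algebra.
Set Implicit Arguments. Unset Strict Implicit. Unset Printing Implicit Defensive.
Import Order.TTheory GRing.Theory Num.Theory.
Local Open Scope ring_scope.

(* Vectors of Q^d are column vectors 'cV[rat]_d; a matrix B : 'M[rat]_(d,n)
   has columns b_1, ..., b_n (0-indexed here as col i B, i : 'I_n). *)

Definition qdot (d : nat) (u v : 'cV[rat]_d) : rat := (u^T *m v) 0 0.

Definition vnorm (R : rcfType) (d : nat) (u : 'cV[rat]_d) : R :=
  Num.sqrt (ratr (qdot u u)).

Definition gs_step (d : nat) (acc : seq 'cV[rat]_d) (b : 'cV[rat]_d) :=
  rcons acc (b - \sum_(u <- acc) (qdot b u / qdot u u) *: u).

Definition gs_seq (d : nat) (bs : seq 'cV[rat]_d) : seq 'cV[rat]_d :=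
  foldl (@gs_step d) [::] bs.

Definition gso (d n : nat) (B : 'M[rat]_(d, n)) (i : 'I_n) : 'cV[rat]_d :=
  nth 0 (gs_seq [seq col j B | j <- enum 'I_n]) i.

Definition lattice_of (d m : nat) (B : 'M[rat]_(d, m)) (v : 'cV[rat]_d) : Prop :=
  exists z : 'cV[int]_m, v = B *m map_mx (fun x : int => x%:~R) z.

Definition lattice_det (R : rcfType) (d l : nat) (C : 'M[rat]_(d, l)) : R :=
  Num.sqrt (ratr (\det (C^T *m C))).

Arguments vnorm R {d} u.
Arguments lattice_det R {d l} C.

(* Main.v *)
Require Import Defs.
From mathcomp Require Import all_boot all_order all_algebra.
From mathcomp Require Import zify ring lra.
Set Implicit Arguments. Unset Strict Implicit. Unset Printing Implicit Defensive.
Import Order.TTheory GRing.Theory Num.Theory.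
Local Open Scope ring_scope.

Section Qdot.
Variable d : nat.
Implicit Types u v w : 'cV[rat]_d.

Lemma qdotE u v : qdot u v = \sum_r u r 0 * v r 0.
Proof. by rewrite /qdot mxE; apply: eq_bigr => r _; rewrite mxE. Qed.

Lemma qdotC u v : qdot u v = qdot v u.
Proof. by rewrite !qdotE; apply: eq_bigr => r _; rewrite mulrC. Qed.

Lemma qdotDl u v w : qdot (u + v) w = qdot u w + qdot v w.
Proof. by rewrite !qdotE -big_split; apply: eq_bigr => r _; rewrite !mxE mulrDl. Qed.

Lemma qdotBl u v w : qdot (u - v) w = qdot u w - qdot v w.
Proof.
rewrite !qdotE -sumrB; apply: eq_bigr => r _; rewrite !mxE; ring.
Qed.

Lemma qdotZl a u w : qdot (a *: u) w = a * qdot u w.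
Proof. by rewrite !qdotE mulr_sumr; apply: eq_bigr => r _; rewrite !mxE mulrA. Qed.

Lemma qdot_suml (I : Type) (s : seq I) (F : I -> 'cV[rat]_d) w :
  qdot (\sum_(i <- s) F i) w = \sum_(i <- s) qdot (F i) w.
Proof.
elim: s => [|x s IH]; first by rewrite !big_nil qdotE big1 // => r _; rewrite mxE mul0r.
by rewrite !big_cons qdotDl IH.
Qed.

Lemma qdot_ge0 u : 0 <= qdot u u.
Proof. by rewrite qdotE; apply: sumr_ge0 => r _; rewrite -expr2 sqr_ge0. Qed.

Lemma qdot_eq0 u : qdot u u = 0 -> u = 0.
Proof.
rewrite qdotE => H; apply/matrixP => r c; rewrite (ord1 c) mxE.
have H2 : \sum_(i < d) u i 0 ^+ 2 = 0.
  by rewrite -[RHS]H; apply: eq_bigr => i _; rewrite expr2.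
have := psumr_eq0P (P := xpredT) (fun i _ => sqr_ge0 (u i 0)) H2 (isT : xpredT r).
by move=> /= E; apply/eqP; rewrite -sqrf_eq0 E.
Qed.
End Qdot.

Section GS.
Variable d : nat.
Implicit Types (bs acc : seq 'cV[rat]_d) (b : 'cV[rat]_d).

Lemma qdot0l (u : 'cV[rat]_d) : qdot 0 u = 0.
Proof. by rewrite -(scale0r 0) qdotZl mul0r. Qed.

Lemma gs_rcons bs b : gs_seq (rcons bs b) = gs_step (gs_seq bs) b.
Proof. by rewrite /gs_seq foldl_rcons. Qed.

Lemma size_gs bs : size (gs_seq bs) = size bs.
Proof.
elim/last_ind: bs => [|bs b IH] //.
by rewrite gs_rcons /gs_step !size_rcons IH.
Qed.

Definition gsv acc b := b - \sum_(u <- acc) (qdot b u / qdot u u) *: u.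

Lemma gsv_orth acc b s : (s < size acc)%N ->
  (forall i j, (i < size acc)%N -> (j < size acc)%N -> i != j -> qdot acc`_i acc`_j = 0) ->
  qdot (gsv acc b) acc`_s = 0.
Proof.
move=> ls orth; rewrite /gsv qdotBl qdot_suml (big_nth 0) big_mkord.
rewrite (bigD1 (Ordinal ls)) //= big1 ?addr0; last first.
  by move=> i /= ne; rewrite qdotZl (orth _ _ (ltn_ord i) ls ne) mulr0.
rewrite qdotZl; have [z|nz] := eqVneq (qdot acc`_s acc`_s) 0.
  by rewrite (qdot_eq0 z) qdot0l mulr0 qdotC qdot0l subrr.
by rewrite divfK // subrr.
Qed.

Lemma gs_orth bs i j : (i < size bs)%N -> (j < size bs)%N -> i != j ->
  qdot (gs_seq bs)`_i (gs_seq bs)`_j = 0.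
Proof.
elim/last_ind: bs i j => [|bs b IH] i j //.
rewrite gs_rcons /gs_step size_rcons => Hi Hj ne.
rewrite ltnS leq_eqVlt in Hi; rewrite ltnS leq_eqVlt in Hj.
have sz := size_gs bs.
rewrite !nth_rcons !sz.
have IH' : forall i' j', (i' < size (gs_seq bs))%N -> (j' < size (gs_seq bs))%N ->
   i' != j' -> qdot (gs_seq bs)`_i' (gs_seq bs)`_j' = 0.
  by move=> i' j'; rewrite !sz; apply: IH.
case/orP: Hi => [/eqP Ei | li]; case/orP: Hj => [/eqP Ej | lj].
- by rewrite Ei Ej eqxx in ne.
- rewrite Ei ltnn lj eqxx -/(gsv _ _); apply: gsv_orth; rewrite ?sz //.
- rewrite Ej ltnn li eqxx qdotC -/(gsv _ _); apply: gsv_orth; rewrite ?sz //.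
- by rewrite li lj; apply: IH.
Qed.

Lemma gs_dec bs i : (i < size bs)%N ->
  bs`_i = (gs_seq bs)`_i + \sum_(t < i) (qdot bs`_i (gs_seq bs)`_t /
      qdot (gs_seq bs)`_t (gs_seq bs)`_t) *: (gs_seq bs)`_t.
Proof.
elim/last_ind: bs i => [|bs b IH] i //.
rewrite gs_rcons /gs_step size_rcons -/(gsv (gs_seq bs) b) => Hi.
rewrite ltnS leq_eqVlt in Hi.
have sz := size_gs bs.
case/orP: Hi => [/eqP Ei | li].
- subst i; rewrite !nth_rcons ltnn eqxx sz ltnn eqxx.
  under eq_bigr => t _ do rewrite !nth_rcons sz (ltn_ord t).
  rewrite {1}/gsv (big_nth 0) big_mkord sz subrK; done.
- rewrite !nth_rcons sz li.
  under eq_bigr => t _ do rewrite !nth_rcons sz (ltn_trans (ltn_ord t) li).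
  exact: IH.
Qed.
End GS.

Section GSmx.
Variables (d n : nat) (B : 'M[rat]_(d, n)).

Definition bsB := [seq col j B | j <- enum 'I_n].
Lemma size_bsB : size bsB = n.
Proof. by rewrite size_map size_enum_ord. Qed.
Lemma bsB_nth (i : 'I_n) : bsB`_i = col i B.
Proof. by rewrite /bsB (nth_map i) ?size_enum_ord // nth_ord_enum. Qed.
Lemma gsoE (i : 'I_n) : gso B i = (gs_seq bsB)`_i.
Proof. by []. Qed.

Definition Qm : 'M[rat]_(d, n) := \matrix_(r, i) gso B i r 0.
Definition Dr : 'rV[rat]_n := \row_i qdot (gso B i) (gso B i).
Definition Um : 'M[rat]_n := \matrix_(t, i)
  if (t < i)%N then qdot (col i B) (gso B t) / qdot (gso B t) (gso B t) else (t == i)%:R.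

Lemma gso_orth (i j : 'I_n) : i != j -> qdot (gso B i) (gso B j) = 0.
Proof. by move=> ne; rewrite !gsoE gs_orth ?size_bsB. Qed.

Lemma QtQ : Qm^T *m Qm = diag_mx Dr.
Proof.
apply/matrixP => i j; rewrite !mxE.
have -> : \sum_r Qm^T i r * Qm r j = qdot (gso B i) (gso B j).
  by rewrite qdotE; apply: eq_bigr => r _; rewrite !mxE.
have [<-|ne] := eqVneq i j; first by rewrite mulr1n.
by rewrite gso_orth // mulr0n.
Qed.

Lemma Um_low (i t : 'I_n) : (t < i)%N -> Um i t = 0.
Proof. by move=> lt; rewrite mxE ltnNge ltnW //=; case: eqP => // E; rewrite E ltnn in lt. Qed.

Lemma Um_diag (i : 'I_n) : Um i i = 1.
Proof. by rewrite mxE ltnn eqxx. Qed.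

Lemma BQU : B = Qm *m Um.
Proof.
apply/matrixP => r i; rewrite mxE.
have li : (i < size bsB)%N by rewrite size_bsB.
have := gs_dec li.
rewrite bsB_nth => /(congr1 (fun M : 'cV_d => M r 0)).
rewrite mxE => ->; rewrite !mxE summxE.
rewrite (bigID (fun t : 'I_n => (t < i)%N)) /= addrC; congr (_ + _).
  pose F := fun t : nat => ((qdot (col i B) (gs_seq bsB)`_t /
        qdot (gs_seq bsB)`_t (gs_seq bsB)`_t) *: (gs_seq bsB)`_t) r 0.
  transitivity (\sum_(t < n | (t < i)%N) F t).
    exact: (big_ord_widen n F (ltnW (ltn_ord i))).
  apply: eq_bigr => t lt; rewrite /F !mxE lt -!gsoE mulrC.
  by [].
rewrite (bigD1 i) ?ltnn //= big1 ?addr0.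
  by rewrite !mxE ltnn eqxx mulr1 gsoE.
move=> t /andP[nlt ne]; rewrite !mxE (negbTE nlt).
by rewrite (negbTE ne) mulr0.
Qed.
End GSmx.

Section Core.
Variable n : nat.
Variable Dr : 'rV[rat]_n.
Hypothesis Dpos : forall i, 0 < Dr 0 i.

Definition gram m (M : 'M[rat]_(n, m)) := \det (M^T *m diag_mx Dr *m M).

Lemma gramM m (M : 'M[rat]_(n, m)) (W : 'M[rat]_m) :
  gram (M *m W) = \det W ^+ 2 * gram M.
Proof.
rewrite /gram trmx_mul -!mulmxA !det_mulmx det_tr !mulmxA det_mulmx.
by rewrite expr2; ring.
Qed.

Lemma quad_ge (a : 'cV[rat]_n) (j : 'I_n) :
  Dr 0 j * a j 0 ^+ 2 <= (a^T *m diag_mx Dr *m a) 0 0.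
Proof.
rewrite mul_mx_diag mxE (bigD1 j) //= !mxE.
have : 0 <= \sum_(i < n | i != j) (\matrix_(i0, j0) ((a^T) i0 j0 * Dr 0 j0)) 0 i * a i 0.
  apply: sumr_ge0 => k _; rewrite !mxE.
  have := Dpos k; have := sqr_ge0 (a k 0); rewrite expr2; nra.
rewrite expr2; lra.
Qed.


Lemma schur p (a : 'cV[rat]_n) (N : 'M[rat]_(n, p)) (j : 'I_n) :
  (forall c, N j c = 0) -> 0 < gram N ->
  Dr 0 j * a j 0 ^+ 2 * gram N <= gram (row_mx a N).
Proof.
move=> Nj gpos.
set X := N^T *m diag_mx Dr *m N.
have uX : X \in unitmx by rewrite unitmxE unitfE; apply: lt0r_neq0.
set x := invmx X *m (N^T *m diag_mx Dr *m a).
pose T : 'M[rat]_(1 + p) := block_mx 1%:M 0 (- x) 1%:M.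
have dT : \det T = 1 by rewrite /T det_lblock !det1 mulr1.
have -> : gram (row_mx a N) = gram (row_mx a N *m T) by rewrite gramM dT expr1n mul1r.
rewrite /T mul_row_block !mulmx1 !mulmx0 add0r.
set a' := a + N *m - x.
have a'j : a' j 0 = a j 0.
  by rewrite /a' !mxE big1 ?addr0 // => c _; rewrite Nj mul0r.
have Z : N^T *m diag_mx Dr *m a' = 0.
  rewrite /a' mulmxDr !mulmxN /x.
  have -> : N^T *m diag_mx Dr *m (N *m (invmx X *m (N^T *m diag_mx Dr *m a))) =
     X *m (invmx X *m (N^T *m diag_mx Dr *m a)) by rewrite /X !mulmxA.
  by rewrite mulKVmx // subrr.
rewrite /gram tr_row_mx mul_col_mx mul_col_row Z det_ublock det_mx11.
rewrite -/X -a'j; apply: ler_wpM2r; first exact: ltW.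
exact: quad_ge.
Qed.

Variable U : 'M[rat]_n.
Hypothesis Ulow : forall (i t : 'I_n), (t < i)%N -> U i t = 0.
Hypothesis Udiag : forall i, U i i = 1.

Lemma rowU p (Y : 'M[rat]_(n, p)) (j : 'I_n) c :
  (forall t : 'I_n, (j < t)%N -> Y t c = 0) -> (U *m Y) j c = Y j c.
Proof.
move=> Yz; rewrite mxE (bigD1 j) //= Udiag mul1r big1 ?addr0 // => t ne.
case: (ltngtP t j) => [lt|gt|eq]; first by rewrite Ulow ?mul0r.
  by rewrite Yz ?mulr0.
by rewrite (val_inj eq) eqxx in ne.
Qed.

Definition zr m p (Z : 'M[int]_(m, p)) : 'M[rat]_(m, p) := map_mx intr Z.

Definition LBP m := forall Z : 'M[int]_(n, m),
  (forall x : 'cV[rat]_m, U *m zr Z *m x = 0 -> x = 0) ->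
  exists S : {set 'I_n}, [/\ #|S| = m,
     \prod_(i in S) Dr 0 i <= gram (U *m zr Z),
     (forall p : nat, (forall (r : 'I_n) c, (p <= r)%N -> Z r c = 0) ->
         forall i, i \in S -> (i < p)%N) &
     (forall (r : 'I_n) c, Z r c != 0 -> exists2 i, i \in S & (r <= i)%N)].

Lemma LB0 : LBP 0.
Proof.
move=> Z _; exists set0; split.
- by rewrite cards0.
- by rewrite big_set0 /gram det_mx00.
- by move=> p _ i; rewrite in_set0.
- by move=> r [].
Qed.

Lemma zrM m p q (A : 'M[int]_(m, p)) (B : 'M[int]_(p, q)) : zr (A *m B) = zr A *m zr B.
Proof. exact: map_mxM. Qed.

Lemma LBS m : LBP m -> LBP m.+1.
Proof.
move=> IH Z inj.
have [[r0 c0] /= nz0] : exists rc : 'I_n * 'I_m.+1, Z rc.1 rc.2 != 0.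
  case: (pickP (fun rc : 'I_n * 'I_m.+1 => Z rc.1 rc.2 != 0)) => [rc H|H]; first by exists rc.
  have Z0 : zr Z = 0.
    apply/matrixP => r c; rewrite !mxE; have := H (r, c).
    by rewrite /= => /negbFE/eqP ->.
  have := inj (delta_mx 0 0); rewrite Z0 mulmx0 mul0mx => /(_ erefl) /matrixP /(_ 0 0).
  by rewrite !mxE eqxx /= => /eqP; rewrite oner_eq0.
pose P := fun r : 'I_n => [exists c, Z r c != 0].
have P0 : P r0 by apply/existsP; exists c0.
case: (arg_maxnP (fun r : 'I_n => val r) P0) => j Pj maxj.
have rowsz : forall r : 'I_n, (j < r)%N -> forall c, Z r c = 0.
  move=> r lt c; apply/eqP; apply: contraTT lt => nz.
  rewrite -leqNgt; apply: maxj; apply/existsP; exists c; exact: nz.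
have [L uL [R uR [dd _ EZ]]] := int_Smith_normal_form (row j Z).
set W := invmx R.
pose g := L 0 0 * dd`_0.
have zW : forall c, (Z *m W) j c = g *+ (c == 0).
  move=> c.
  have := congr1 (fun M : 'M[int]_(1, m.+1) => M 0 c) (row_mul j Z W); rewrite mxE => ->.
  rewrite EZ /W mulmxK // mxE big_ord1 mxE /g mulrnAr.
  by rewrite (eq_sym 0).
have gnz : g != 0.
  apply/negP => /eqP g0; move: Pj; rewrite /P => /existsP[c].
  have -> : Z j c = (row j Z) 0 c by rewrite mxE.
  rewrite -[row j Z](mulmxKV uR) -/W.
  have -> : row j Z *m W = 0.
    apply/matrixP => i c'; rewrite (ord1 i) -row_mul mxE zW g0 mul0rn mxE //.
  by rewrite mul0mx mxE eqxx.
have uW : W \in unitmx by rewrite unitmx_inv.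
have dW2 : (\det (zr W)) ^+ 2 = 1.
  rewrite /zr det_map_mx -rmorphXn /=.
  have u : \det W \is a GRing.unit by rewrite -unitmxE.
  have /eqP -> : \det W ^+ 2 == 1 by rewrite sqrf_eq1; exact: u.
  by [].
have uWr : zr W \in unitmx.
  rewrite unitmxE unitfE; apply/eqP => d0; move: dW2; rewrite d0 expr0n /=.
  by move/eqP; rewrite eq_sym oner_eq0.
set Z' := Z *m W.
have zW' : forall c, Z' j c = g *+ (c == 0) := zW.
have Z'hi : forall r : 'I_n, (j < r)%N -> forall c, Z' r c = 0.
  by move=> r lt c; rewrite /Z' mxE big1 // => k _; rewrite rowsz ?mul0r.
have gramE : gram (U *m zr Z) = gram (U *m zr Z').
  by rewrite /Z' zrM mulmxA gramM dW2 mul1r.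
pose Z'' := rsubmx (Z' : 'M_(n, 1 + m)).
pose a := U *m zr (lsubmx (Z' : 'M_(n, 1 + m))).
pose N := U *m zr Z''.
have M'E : U *m zr Z' = row_mx a N.
  by rewrite /a /N -mul_mx_row /zr -map_row_mx hsubmxK.
have injN : forall x : 'cV[rat]_m, N *m x = 0 -> x = 0.
  move=> x Nx.
  pose y : 'cV[rat]_(1 + m) := col_mx 0 x.
  have E1 : U *m zr Z *m (zr W *m y) = 0.
    have -> : U *m zr Z *m (zr W *m y) = U *m zr Z' *m y.
      by rewrite /Z' zrM !mulmxA.
    have H0 : row_mx a N *m y = 0 by rewrite /y mul_row_col mulmx0 add0r Nx.
    by rewrite M'E; exact: H0.
  have E2 := inj _ E1.
  have : y = 0.
    by rewrite -[y](mulKmx uWr) E2 mulmx0.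
  by move/eqP; rewrite /y col_mx_eq0 => /andP[_ /eqP].
have [S' [cS' leS' cS dS]] := IH Z'' injN.
have S'lt : forall i, i \in S' -> (i < j)%N.
  apply: cS => r c le; rewrite /Z'' mxE.
  case: (ltngtP j r) le => [lt _|//|eq _]; first exact: Z'hi.
  have -> : r = j by apply: val_inj.
  by apply: (etrans (zW' (rshift 1 c))).
have jS' : j \notin S' by apply/negP => /S'lt; rewrite ltnn.
have Z''j : forall c, Z'' j c = 0.
  by move=> c; rewrite /Z'' mxE; apply: (etrans (zW' _)).
have Z''hi : forall t : 'I_n, (j < t)%N -> forall c, Z'' t c = 0.
  by move=> t lt c; rewrite /Z'' mxE; apply: Z'hi.
have Zlj : lsubmx (Z' : 'M_(n, 1 + m)) j 0 = g.
  by rewrite mxE; apply: (etrans (zW' _)).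
have Zlhi : forall t : 'I_n, (j < t)%N -> lsubmx (Z' : 'M_(n, 1 + m)) t 0 = 0.
  by move=> t lt; rewrite mxE; apply: Z'hi.
have Nj : forall c, N j c = 0.
  move=> c; rewrite /N rowU.
    by rewrite /zr mxE Z''j.
  by move=> t lt; rewrite /zr mxE Z''hi.
have aj : a j 0 = g%:~R.
  rewrite /a rowU.
    by rewrite /zr mxE Zlj.
  by move=> t lt; rewrite /zr mxE Zlhi.
have gN : 0 < gram N.
  apply: lt_le_trans leS'; apply: prodr_gt0 => i _; exact: Dpos.
have g2 : 1 <= a j 0 ^+ 2.
  rewrite aj -rmorphXn /= ler1z; move: gnz; rewrite expr2; lia.
exists (j |: S'); split.
- by rewrite cardsU1 jS' cS'.
- rewrite big_setU1 //= gramE M'E.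
  refine (le_trans _ (schur a Nj gN)).
  rewrite -mulrA; apply: ler_wpM2l; first exact: ltW.
  apply: le_trans (_ : 1 * gram N <= _); first by rewrite mul1r.
  by apply: ler_wpM2r => //; exact: ltW.
- move=> p Hp i; rewrite in_setU1 => /orP[/eqP -> | iS].
    rewrite ltnNge; apply/negP => le; move: Pj; rewrite /P => /existsP[c].
    by rewrite Hp.
  have := S'lt i iS; move=> lt.
  rewrite ltnNge; apply/negP => le; move: Pj; rewrite /P => /existsP[c].
  by rewrite Hp // (leq_trans le) // ltnW.
- move=> r c nz; exists j; first by rewrite setU11.
  by apply: maxj; apply/existsP; exists c.
Qed.

Lemma LB m : LBP m.
Proof. elim: m => [|m IH]; [exact: LB0 | exact: LBS]. Qed.

End Core.

Lemma inj_rank p q (A : 'M[rat]_(p, q)) : \rank A = q ->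
  forall x : 'cV[rat]_q, A *m x = 0 -> x = 0.
Proof.
move=> rk x Ax.
have rf : row_free A^T by rewrite /row_free mxrank_tr rk.
apply: trmx_inj; rewrite trmx0.
apply: (row_free_inj rf); rewrite /= mul0mx -(trmx_mul A x) Ax trmx0.
by [].
Qed.

Section GSmx2.
Variables (d n : nat) (B : 'M[rat]_(d, n)).

Lemma detUm : \det (Um B) = 1.
Proof.
rewrite -det_tr det_trig.
  by rewrite big1 // => i _; rewrite mxE Um_diag.
apply/forallP => i; apply/forallP => j; apply/implyP => lt.
by rewrite mxE Um_low.
Qed.

Lemma colQ (i : 'I_n) : col i (Qm B) = gso B i.
Proof. by apply/matrixP => r c; rewrite (ord1 c) !mxE. Qed.

Lemma DposB : \rank B = n -> forall i, 0 < Dr B 0 i.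
Proof.
move=> rk i; rewrite mxE lt_def qdot_ge0 andbT; apply/eqP => z.
have g0 := qdot_eq0 z.
have uU : Um B \in unitmx by rewrite unitmxE detUm unitr1.
pose e : 'cV[rat]_n := delta_mx i 0.
have : B *m (invmx (Um B) *m e) = 0.
  by rewrite {1}(BQU B) mulmxA mulmxK // -(colE i) colQ g0.
move/(inj_rank rk) => H.
have : e = 0 by rewrite -[e](mulKVmx uU) H mulmx0.
by move/matrixP/(_ i 0); rewrite !mxE !eqxx /= => /eqP; rewrite oner_eq0.
Qed.
End GSmx2.

Unset Implicit Arguments.
Set Strict Implicit.

Theorem mainTheorem15 (R : rcfType) (d n : nat) (B : 'M[rat]_(d, n))
  (k l : nat) (alpha : R) (C : 'M[rat]_(d, l)) :
  \rank B = n ->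
  (1 <= k <= n)%N ->
  Num.sqrt (n%:R) < alpha ->
  (forall i j : 'I_n, (i < k)%N -> (k <= j)%N ->
     vnorm R (gso B i) <= vnorm R (gso B j) / alpha) ->
  \rank C = l ->
  (forall j : 'I_l, lattice_of B (col j C)) ->
  (l <= k)%N ->
  (forall S : {set 'I_n}, #|S| = l ->
     lattice_det R C < alpha / Num.sqrt (n%:R) * \prod_(i in S) vnorm R (gso B i)) ->
  forall v : 'cV[rat]_d, lattice_of C v ->
    exists z : 'cV[int]_n,
      v = B *m map_mx (fun x : int => x%:~R) z /\ (forall j : 'I_n, (k <= j)%N -> z j 0 = 0).
Proof.
move=> rkB /andP[k1 kn] an Hgs rkC Hlat lk Hdet v [w ->].
have n1 : (1 <= n)%N := leq_trans k1 kn.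
have [zf Hzf] := fin_all_exists Hlat.
pose Z : 'M[int]_(n, l) := \matrix_(r, c) zf c r 0.
have CE : C = B *m zr Z.
  apply/matrixP => r c.
  have := congr1 (fun M : 'cV[rat]_d => M r 0) (Hzf c); rewrite /= /col !mxE => ->.
  by apply: eq_bigr => t _; rewrite /zr !mxE.
set Dv := Dr B.
have Dp : forall i, 0 < Dv 0 i := DposB rkB.
have CtC : C^T *m C = (Um B *m zr Z)^T *m diag_mx Dv *m (Um B *m zr Z).
  by rewrite CE /Dv -QtQ [in LHS](BQU B) !trmx_mul !mulmxA.
have inj : forall x : 'cV[rat]_l, Um B *m zr Z *m x = 0 -> x = 0.
  move=> x H; apply: (inj_rank rkC).
  rewrite -!mulmxA in H; by rewrite CE [in LHS](BQU B) -!mulmxA H mulmx0.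
have [S [cS leS _ dS]] := LB Dp (@Um_low _ _ B) (@Um_diag _ _ B) inj.
have Zk : forall (r : 'I_n) c, (k <= r)%N -> Z r c = 0.
  move=> r c kr; apply/eqP; apply/negP => /negP nz.
  have [j jS rj] := dS r c nz.
  have kj : (k <= j)%N := leq_trans kr rj.
  have [i /andP[ik iS] | none] := pickP (fun i : 'I_n => (i < k)%N && (i \notin S)); last first.
    pose A := [set widen_ord kn t | t : 'I_k].
    have cA : #|A| = k.
      rewrite card_imset ?card_ord // => x y /(congr1 val) /= /val_inj //.
    have jA : j \notin A.
      apply/imsetP => [[t _ /(congr1 val) /= E]].
      by move: (ltn_ord t); rewrite -E ltnNge kj.
    have sub : j |: A \subset S.
      apply/subsetP => x; rewrite in_setU1 => /orP[/eqP -> // | /imsetP[t _ ->]].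
      have := none (widen_ord kn t); rewrite /= (ltn_ord t) /=.
      by move/negbFE.
    have := subset_leq_card sub; rewrite cardsU1 jA cA cS add1n => H.
    by move: (leq_trans H lk); rewrite ltnn.
  pose S2 := i |: (S :\ j).
  have iS2 : i \notin S :\ j by rewrite in_setD1 (negbTE iS) andbF.
  have cS2 : #|S2| = l by rewrite cardsU1 iS2 -cS (cardsD1 j S) jS.
  have H1 := Hdet S2 cS2.
  have H2 := Hgs i j ik kj.
  set G := \det (C^T *m C).
  have GE : G = gram Dv (Um B *m zr Z) by rewrite /G CtC.
  rewrite (big_setD1 j) //= -GE in leS.
  set K := \prod_(t in S :\ j) Dv 0 t in leS.
  have K0 : 0 <= K by apply: prodr_ge0 => t _; exact: ltW.
  have PS2 : (\prod_(t in S2) vnorm R (gso B t)) ^+ 2 = ratr (Dv 0 i) * ratr K.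
    rewrite -prodrXl big_setU1 //= /K rmorph_prod /=; congr (_ * _).
      by rewrite /vnorm sqr_sqrtr ?ler0q ?qdot_ge0 // /Dv mxE.
    by apply: eq_bigr => t _; rewrite /vnorm sqr_sqrtr ?ler0q ?qdot_ge0 // /Dv mxE.
  have P0 : 0 <= \prod_(t in S2) vnorm R (gso B t).
    by apply: prodr_ge0 => t _; exact: sqrtr_ge0.
  set P := \prod_(t in S2) vnorm R (gso B t) in H1 PS2 P0.
  have a0 : 0 < alpha by apply: le_lt_trans an; exact: sqrtr_ge0.
  have sn1 : 1 <= Num.sqrt (n%:R : R).
    by rewrite -{1}sqrtr1 ler_sqrt ?ler0n // ler1n.
  have H1' : lattice_det R C < alpha * P.
    apply: (lt_le_trans H1); apply: ler_wpM2r => //.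
    rewrite ler_pdivrMr ?(lt_le_trans ltr01 sn1) //.
    by rewrite -{1}(mulr1 alpha) ler_wpM2l // ltW.
  rewrite ler_pdivlMr // in H2.
  have vi0 : 0 <= vnorm R (gso B i) := sqrtr_ge0 _.
  have vi2 : vnorm R (gso B i) ^+ 2 = ratr (Dv 0 i).
    by rewrite /vnorm sqr_sqrtr ?ler0q ?qdot_ge0 // /Dv mxE.
  have vj2 : vnorm R (gso B j) ^+ 2 = ratr (Dv 0 j).
    by rewrite /vnorm sqr_sqrtr ?ler0q ?qdot_ge0 // /Dv mxE.
  have L0 : 0 <= lattice_det R C := sqrtr_ge0 _.
  have L2 : lattice_det R C ^+ 2 = ratr G.
    have G0 : 0 <= G.
      by refine (le_trans _ leS); apply: mulr_ge0 => //; exact: ltW.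
    by rewrite /lattice_det -/G sqr_sqrtr // ler0q.
  have leSR : ratr (Dv 0 j) * ratr K <= ratr G :> R.
    by rewrite -rmorphM /= ler_rat.
  have KR : 0 <= ratr K :> R by rewrite ler0q.
  set vi := vnorm R (gso B i) in H2 vi0 vi2.
  set vj := vnorm R (gso B j) in H2 vj2.
  set LD := lattice_det R C in H1' L0 L2.
  have e1 : alpha ^+ 2 * vi ^+ 2 <= vj ^+ 2.
    have h1 : 0 <= vj - alpha * vi by rewrite subr_ge0 mulrC.
    have h2 : 0 <= vj + alpha * vi.
      by apply: addr_ge0; [exact: le_trans (mulr_ge0 vi0 (ltW a0)) H2 | exact: mulr_ge0 (ltW a0) vi0].
    have := mulr_ge0 h1 h2.
    rewrite !expr2; nra.
  rewrite vi2 vj2 in e1.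
  have e2 : alpha ^+ 2 * P ^+ 2 <= ratr G.
    rewrite PS2 mulrA; refine (le_trans _ leSR); exact: ler_wpM2r.
  have e3 : LD ^+ 2 < alpha ^+ 2 * P ^+ 2.
    have h1 : 0 < alpha * P - LD by rewrite subr_gt0.
    have h2 : 0 < alpha * P + LD by lra.
    have := mulr_gt0 h1 h2.
    rewrite !expr2; nra.
  by move: (lt_le_trans e3 e2); rewrite L2 ltxx.
exists (Z *m w); split.
  by rewrite CE -mulmxA -(zrM Z w).
move=> j kj; rewrite mxE big1 // => c _; by rewrite Zk ?mul0r.
Qed.
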